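(* Let $A$ be a commutative ring and $\sigma$ a hereditary torsion theory on $A$-modules such that $A$ is $\sigma$-artinian. Then $\mathcal{K}(\sigma)$ is a finite set.
   Context: $\mathcal{L}(\sigma)$ is the Gabriel filter of $\sigma$. $A$ is $\sigma$-artinian if for every descending chain of ideals $\mathfrak{a}_1\supseteq\mathfrak{a}_2\supseteq\cdots$ there is an index $m$ such that for every $s\ge m$ the module $\mathfrak{a}_m/\mathfrak{a}_s$ is $\sigma$-torsion (i.e. for each $x\in\mathfrak{a}_m$ there is $\mathfrak{h}\in\mathcal{L}(\sigma)$ with $x\mathfrak{h}\subseteq\mathfrak{a}_s$). $\mathcal{K}(\sigma)$ is the set of prime ideals $\mathfrak{p}$ of $A$ with $\mathfrak{p}\notin\mathcal{L}(\sigma)$. *)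

(* Defs.v *)
From mathcomp Require Import all_boot all_algebra.
Set Implicit Arguments. Unset Strict Implicit. Unset Printing Implicit Defensive.
Import GRing.Theory.
Local Open Scope ring_scope.

Definition is_ideal (A : comPzRingType) (I : A -> Prop) : Prop :=
  [/\ I 0, (forall x y, I x -> I y -> I (x + y)) & (forall a x, I x -> I (a * x))].

Definition is_prime_ideal (A : comPzRingType) (p : A -> Prop) : Prop :=
  [/\ is_ideal p, ~ p 1 & (forall a b, p (a * b) -> p a \/ p b)].

Definition colon_ideal (A : comPzRingType) (I : A -> Prop) (a : A) : A -> Prop :=
  fun x => I (x * a).

(* Gabriel filter (Gabriel topology) of ideals, axioms T1-T4 of Stenstrom,
   Rings of Quotients, VI.5.  Hereditary torsion theories on A-Mod are in
   bijection with Gabriel filters; sigma is represented by L(sigma). *)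
Definition gabriel_filter (A : comPzRingType) (L : (A -> Prop) -> Prop) : Prop :=
  [/\ (forall I, L I -> is_ideal I),
      L (fun _ => True) /\
      (forall I J, L I -> is_ideal J -> (forall x, I x -> J x) -> L J),
      (forall I J, L I -> L J -> L (fun x => I x /\ J x)),
      (forall I a, L I -> L (colon_ideal I a)) &
      (forall I J, L I -> is_ideal J -> (forall a, I a -> L (colon_ideal J a)) -> L J)].

Definition sigma_artinian (A : comPzRingType) (L : (A -> Prop) -> Prop) : Prop :=
  forall a : nat -> A -> Prop,
    (forall n, is_ideal (a n)) ->
    (forall n x, a n.+1 x -> a n x) ->
    exists m, forall s, (m <= s)%N -> forall x, a m x ->
      exists2 h, L h & forall y, h y -> a s (x * y).

Definition K_sigma (A : comPzRingType) (L : (A -> Prop) -> Prop) (p : A -> Prop) : Prop :=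
  is_prime_ideal p /\ ~ L p.

Definition finite_family (A : Type) (S : (A -> Prop) -> Prop) : Prop :=
  exists (n : nat) (f : nat -> A -> Prop), forall p, S p ->
    exists i, (i < n)%N /\ (forall x, p x <-> f i x).

(* Main.v *)
Require Import Defs.
From mathcomp Require Import all_boot all_algebra.
From Stdlib Require Import Classical ClassicalEpsilon.

Section Helpers.
Import GRing.Theory.
Local Open Scope ring_scope.
Variable A : comPzRingType.

Lemma ideal_opp (I : A -> Prop) x : is_ideal I -> I x -> I (- x).
Proof. by case=> _ _ Hm Hx; rewrite -mulN1r; apply: Hm. Qed.

Lemma ideal_sub (I : A -> Prop) x y : is_ideal I -> I x -> I y -> I (x - y).
Proof. move=> HI Hx Hy; case: (HI) => _ Ha _; apply: Ha => //; exact: ideal_opp. Qed.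

Lemma prime_exp (p : A -> Prop) x m : is_prime_ideal p -> p (x ^+ m) -> p x.
Proof.
case=> _ n1 pr; elim: m => [|m IH]; first by rewrite expr0.
by rewrite exprS => /pr [] // /IH.
Qed.

Lemma notin_L (L : (A -> Prop) -> Prop) h q : gabriel_filter L -> L h -> is_ideal q -> ~ L q ->
  exists y, h y /\ ~ q y.
Proof.
case=> _ [_ up] _ _ _ Lh Iq nLq; apply: NNPP => H; apply: nLq; apply: (up h q) => // y hy.
by apply: NNPP => nq; apply: H; exists y.
Qed.

Lemma incomparable (L : (A -> Prop) -> Prop) p q : gabriel_filter L -> sigma_artinian L ->
  K_sigma L p -> K_sigma L q -> (forall x, p x -> q x) -> forall x, q x -> p x.
Proof.
move=> HL Hart [pp nLp] [pq nLq] spq x qx; apply: NNPP => npx.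
have Ip : is_ideal p by case: pp.
have Iq : is_ideal q by case: pq.
pose a := fun (n : nat) z => exists r, p (z - x ^+ n * r).
have Ia : forall n, is_ideal (a n).
  move=> n; split.
  - by exists 0; rewrite mulr0 subr0; case: Ip.
  - move=> z1 z2 [r1 h1] [r2 h2]; exists (r1 + r2).
    have -> : z1 + z2 - x ^+ n * (r1 + r2) = (z1 - x ^+ n * r1) + (z2 - x ^+ n * r2).
      by rewrite mulrDr opprD addrACA.
    by case: Ip => _ Ha _; apply: Ha.
  - move=> c z [r h]; exists (c * r).
    have -> : c * z - x ^+ n * (c * r) = c * (z - x ^+ n * r).
      by rewrite mulrBr mulrCA.
    by case: Ip => _ _ Hm; apply: Hm.
have dec : forall n z, a n.+1 z -> a n z.
  by move=> n z [r h]; exists (x * r); rewrite mulrA -exprSr.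
case: (Hart a Ia dec) => m Hm.
have am : a m (x ^+ m) by exists 1; rewrite mulr1 subrr; case: Ip.
case: (Hm m.+1 (leqnSn m) _ am) => h Lh Hh.
case: (@notin_L _ _ _ HL Lh Iq nLq) => y [hy nqy].
case: (Hh y hy) => r hr.
have : p (x ^+ m * (y - x * r)) by rewrite mulrBr mulrA -exprSr.
have [_ _ pr] := pp.
case/pr => [/(@prime_exp _ x m pp)|] //.
move=> /spq hq; apply: nqy.
have -> : y = (y - x * r) + x * r by rewrite subrK.
case: Iq => _ Ha Hm'; apply: Ha => //; rewrite mulrC; exact: Hm'.
Qed.

Lemma prime_avoid (P : A -> Prop) (I : nat -> A -> Prop) m : is_prime_ideal P ->
  (forall i, is_ideal (I i)) -> (forall i, (i < m)%N -> exists x, I i x /\ ~ P x) ->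
  exists x, (forall i, (i < m)%N -> I i x) /\ ~ P x.
Proof.
move=> [_ n1 pr] HI; elim: m => [|m IH] H.
  by exists 1; split.
case: IH => [i lt|x [Hx nPx]]; first by apply: H; apply: leqW.
case: (H m (ltnSn m)) => x' [Ix' nPx'].
exists (x * x'); split; last by case/pr.
move=> i; rewrite ltnS leq_eqVlt => /orP [/eqP ->|lt].
  by case: (HI m) => _ _ Hm; apply: Hm.
by rewrite mulrC; case: (HI i) => _ _ Hm; apply: Hm; apply: Hx.
Qed.

Fixpoint build (T : Type) (pick : seq T -> T) (n : nat) : seq T :=
  match n with 0 => [::] | n.+1 => pick (build T pick n) :: build T pick n end.
Arguments build {T}.

Lemma build_mem (T : Type) (pick : seq T -> T) (d : T) i j : (i < j)%N ->
  exists k, (k < size (build pick j))%N /\ nth d (build pick j) k = pick (build pick i).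
Proof.
elim: j => [//|j IH]; rewrite ltnS leq_eqVlt => /orP [/eqP ->|lt].
  by exists 0%N.
by case: (IH lt) => k [hk hn]; exists k.+1.
Qed.

End Helpers.
Arguments build {T}.
Arguments build_mem {T}.

Theorem mainTheorem16 (A : comPzRingType) (L : (A -> Prop) -> Prop) :
  gabriel_filter L -> sigma_artinian L -> finite_family (K_sigma L).
Proof.
move=> HL Hart; apply: NNPP => Hnf.
have step : forall l : seq (A -> Prop), exists p, K_sigma L p /\
    forall i, (i < size l)%N -> ~ (forall x, p x <-> nth (fun _ => False) l i x).
  move=> l; apply: NNPP => H; apply: Hnf.
  exists (size l), (fun i => nth (fun _ => False) l i) => p Kp.
  apply: NNPP => H2; apply: H; exists p; split => // i hi heq; apply: H2; by exists i.
pose pick := fun l => proj1_sig (constructive_indefinite_description _ (step l)).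
have spec : forall l, K_sigma L (pick l) /\ forall i, (i < size l)%N ->
    ~ (forall x, pick l x <-> nth (fun _ => False) l i x).
  by move=> l; exact: (proj2_sig (constructive_indefinite_description _ (step l))).
pose g := fun n => pick (build pick n).
have Kg : forall n, K_sigma L (g n) by move=> n; case: (spec (build pick n)).
have Ig : forall n, is_ideal (g n) by move=> n; case: (Kg n) => [[]].
have dist : forall i j, (i < j)%N -> ~ (forall x, g j x <-> g i x).
  move=> i j lt; case: (build_mem pick (fun _ => False) _ _ lt) => k [hk hn].
  case: (spec (build pick j)) => _ /(_ k hk); rewrite hn; exact.
pose a := fun (n : nat) (x : A) => forall i, (i < n)%N -> g i x.
have Ia : forall n, is_ideal (a n).
  move=> n; split.
  - by move=> i _; case: (Ig i).
  - by move=> x y hx hy i lt; case: (Ig i) => _ Ha _; apply: Ha; [apply: hx|apply: hy].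
  - by move=> c x hx i lt; case: (Ig i) => _ _ Hm; apply: Hm; apply: hx.
have dec : forall n x, a n.+1 x -> a n x by move=> n x h i lt; apply: h; apply: leqW.
case: (Hart a Ia dec) => m Hm.
have sub : forall x, a m x -> g m x.
  move=> x ax; case: (Hm m.+1 (leqnSn m) x ax) => h Lh Hh.
  case: (Kg m) => Pm nLm.
  case: (@notin_L _ _ _ _ HL Lh (Ig m) nLm) => y [hy ngy].
  have := Hh y hy m (ltnSn m).
  by case: Pm => _ _ pr /pr [].
have [i [lt Hi]] : exists i, (i < m)%N /\ forall x, g i x -> g m x.
  apply: NNPP => H.
  have Pm : is_prime_ideal (g m) by case: (Kg m).
  case: (@prime_avoid _ _ _ m Pm Ig) => [i lt|x [Hx nx]].
    apply: NNPP => H2; apply: H; exists i; split => // x gx.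
    by apply: NNPP => ng; apply: H2; exists x.
  by apply: nx; apply: sub.
apply: (dist i m lt) => x; split; last exact: Hi.
exact: (@incomparable _ _ _ _ HL Hart (Kg i) (Kg m) Hi).
Qed.
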